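(* Let $n=n_1+\dots+n_k=p+q$ with positive integers, let $G=U(n)$, let $L=U(n_1)\times\cdots\times U(n_k)$ and $H=U(p)\times U(q)$ be the natural block-diagonal subgroups of $G$, and let $G'=O(n)$. If $\min(p,q)\ge 3$ and $k\ge 4$, then $LG'H\subsetneq G$.
   Context: $LG'H=\{xyz:x\in L,y\in G',z\in H\}$. *)

(* Defs.v *)
From HB Require Import structures.
From mathcomp Require Import all_boot all_order all_algebra.
From mathcomp Require Import complex.
From mathcomp Require Import Rstruct.
Set Implicit Arguments. Unset Strict Implicit. Unset Printing Implicit Defensive.
Import Order.TTheory GRing.Theory Num.Theory.
Local Open Scope ring_scope.

Definition CC := complex Rdefinitions.R.

Definition adjmx n (A : 'M[CC]_n) : 'M[CC]_n := (map_mx Num.conj A)^T.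

Definition unitary_mx n (A : 'M[CC]_n) : Prop := A *m adjmx A = 1%:M.

Definition orthogonal_mx n (A : 'M[CC]_n) : Prop :=
  unitary_mx A /\ (forall i j, A i j \is Num.real).

(* blk ns i = index of the block (of sizes ns = [n_1; ...; n_k]) containing
   the (0-based) index i. *)
Fixpoint blk (ns : seq nat) (i : nat) : nat :=
  match ns with
  | [::] => 0
  | m :: ns' => if (i < m)%N then 0 else (blk ns' (i - m)).+1
  end.

Definition block_unitary (ns : seq nat) n (A : 'M[CC]_n) : Prop :=
  unitary_mx A /\
  (forall i j : 'I_n, blk ns i != blk ns j -> A i j = 0).

(* Main.v *)
Require Import Defs.
From HB Require Import structures.
From mathcomp Require Import all_boot all_order all_algebra all_fingroup.
From mathcomp Require Import complex.
From mathcomp Require Import Rstruct.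
From mathcomp Require Import ring lra zify.
Import Order.TTheory GRing.Theory Num.Theory.
Local Open Scope ring_scope.
Set Implicit Arguments. Unset Strict Implicit.
Section CST.
Local Open Scope complex_scope.


Definition RR := Rdefinitions.R.
Lemma cmul (a b c d : RR) : (a +i* b) * (c +i* d) = (a*c - b*d) +i* (a*d + b*c) :> CC.
Proof. by []. Qed.
Lemma cadd (a b c d : RR) : (a +i* b) + (c +i* d) = (a+c) +i* (b+d) :> CC.
Proof. by []. Qed.
Lemma cconj (a b : RR) : Num.conj (a +i* b) = a +i* (-b) :> CC.
Proof. by []. Qed.
Lemma c0 : (0 : CC) = 0 +i* 0. Proof. by []. Qed.
Lemma c1 : (1 : CC) = 1 +i* 0. Proof. by []. Qed.

Definition h : RR := 1/2.
Definition Uf (i j : nat) : CC :=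
  match i, j with
  | 0, 0 => 0 | 0, 1 => h +i* 0 | 0, 2 => h +i* 0 | 0, 3 => h +i* (-h)
  | 1, 0 => h +i* 0 | 1, 1 => h +i* 0 | 1, 2 => 0 +i* h | 1, 3 => (-h) +i* 0
  | 2, 0 => h +i* 0 | 2, 1 => 0 +i* (-h) | 2, 2 => (-h) +i* 0 | 2, 3 => h +i* 0
  | 3, 0 => h +i* h | 3, 1 => (-h) +i* 0 | 3, 2 => h +i* 0 | _, _ => 0
  end.
Definition U : 'M[CC]_4 := \matrix_(i, j) Uf i j.

Ltac csimp := repeat (rewrite ?cconj ?cmul ?cadd /=).

Lemma U_unit : U *m adjmx U = 1%:M.
Proof.
apply/matrixP => i j; rewrite !mxE.
rewrite !big_ord_recr big_ord0 /= !mxE /=.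
case: i => [[|[|[|[|i]]]] Hi] //; case: j => [[|[|[|[|j]]]] Hj] //=.
all: rewrite /Uf /= ?mulr1n ?mulr0n ?c0 ?c1; csimp; rewrite /h.
all: try done.
all: apply: f_equal2; field.


all: done.
Qed.

Definition D4 : 'M[CC]_4 := diag_mx (\row_(r < 4) ((r < 2)%N%:R : CC)).
Definition Q := U *m D4 *m adjmx U.
Definition i0 : 'I_4 := @Ordinal 4 0 isT.
Definition i1 : 'I_4 := @Ordinal 4 1 isT.
Definition i2 : 'I_4 := @Ordinal 4 2 isT.

Ltac qent := rewrite /Q /D4 mul_mx_diag !mxE !big_ord_recr !big_ord0 /= !mxE /=;
  rewrite /Uf /= ?mulr1n ?mulr0n ?c0 ?c1; csimp; rewrite /h; try (apply: f_equal2; field; done).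

Lemma Q01 : Q i0 i1 = (1/4) +i* 0. Proof. qent. Qed.
Lemma Q12 : Q i1 i2 = (1/4) +i* (1/4). Proof. qent. Qed.
Lemma Q20 : Q i2 i0 = 0 +i* (-1/4). Proof. qent. Qed.

Lemma trip_nonreal : Num.conj (Q i0 i1 * Q i1 i2 * Q i2 i0) != Q i0 i1 * Q i1 i2 * Q i2 i0.
Proof.
rewrite Q01 Q12 Q20; csimp.
rewrite eq_complex /= negb_and; apply/orP; right.
apply/eqP => H.
have E : (1 / 4 * (1 / 4) - 0 * (1 / 4)) * (-1 / 4) + (1 / 4 * (1 / 4) + 0 * (1 / 4)) * 0 = - (1/64) :> RR by field.
rewrite E in H. lra.
Qed.

End CST.


Definition adjm {m n} (A : 'M[CC]_(m,n)) : 'M[CC]_(n,m) := (map_mx Num.conj A)^T.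

Lemma adjmM m n k (A : 'M[CC]_(m,n)) (B : 'M_(n,k)) : adjm (A *m B) = adjm B *m adjm A.
Proof. by rewrite /adjm map_mxM trmx_mul. Qed.

Lemma adjmD m n (A B : 'M[CC]_(m,n)) : adjm (A + B) = adjm A + adjm B.
Proof. by rewrite /adjm map_mxD linearD. Qed.

Lemma adjmN m n (A : 'M[CC]_(m,n)) : adjm (- A) = - adjm A.
Proof. by rewrite /adjm map_mxN linearN. Qed.

Lemma adjmB m n (A B : 'M[CC]_(m,n)) : adjm (A - B) = adjm A - adjm B.
Proof. by rewrite adjmD adjmN. Qed.

Lemma adjm1 n : adjm (1%:M : 'M[CC]_n) = 1%:M.
Proof. by apply/matrixP => i j; rewrite !mxE rmorphMn rmorph1 eq_sym. Qed.

Lemma adjm_nat m n (f : 'I_m -> 'I_n -> nat) :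
  adjm (\matrix_(i, j) (f i j)%:R) = \matrix_(i, j) (f j i)%:R.
Proof. by apply/matrixP => i j; rewrite !mxE rmorph_nat. Qed.

Lemma map_nat m n (f : 'I_m -> 'I_n -> nat) :
  map_mx Num.conj (\matrix_(i, j) (f i j)%:R : 'M[CC]_(m,n)) = \matrix_(i, j) (f i j)%:R.
Proof. by apply/matrixP => i j; rewrite !mxE rmorph_nat. Qed.

Lemma adjmx_adjm n (A : 'M[CC]_n) : adjmx A = adjm A.
Proof. by []. Qed.

Lemma unitaryC n (A : 'M[CC]_n) : unitary_mx A -> adjm A *m A = 1%:M.
Proof. by move/mulmx1C. Qed.

Lemma map_diag n (d : 'I_n -> CC) :
  map_mx Num.conj (diag_mx (\row_i d i)) = diag_mx (\row_i Num.conj (d i)).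
Proof.
apply/matrixP => i j; rewrite !mxE; case: (i == j); by rewrite ?mulr1n ?mulr0n ?conjC0.
Qed.

Lemma zid m n (a b c e : 'M[CC]_(m,n)) : (b - e) + (a - e) + ((c - a) - (b - e)) = c - e.
Proof. apply/matrixP => i j; rewrite !mxE; ring. Qed.


Section Sel.
Variable n : nat.
Variable sel : 'I_4 -> 'I_n.
Hypothesis sel_inj : injective sel.

Definition Esel : 'M[CC]_(4,n) := \matrix_(r, j) (j == sel r)%:R.

Lemma EselF : Esel *m Esel^T = 1%:M.
Proof.
apply/matrixP => r r'; rewrite !mxE (bigD1 (sel r)) //= big1 => [|j /negbTE Hj]; last first.
  by rewrite !mxE Hj mul0r.
by rewrite !mxE eqxx mul1r addr0 (inj_eq sel_inj) eq_sym.
Qed.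

Lemma adjm_E : adjm Esel = Esel^T.
Proof. by apply/matrixP => i j; rewrite !mxE rmorph_nat. Qed.
Lemma adjm_Et : adjm Esel^T = Esel.
Proof. by apply/matrixP => i j; rewrite !mxE rmorph_nat. Qed.

Lemma diag_selF (dd : 'I_n -> CC) (d4 : 'I_4 -> CC) : (forall r, dd (sel r) = d4 r) ->
  diag_mx (\row_i dd i) *m Esel^T = Esel^T *m diag_mx (\row_r d4 r).
Proof.
move=> H; apply/matrixP => i r; rewrite mul_diag_mx mul_mx_diag !mxE.
case: (eqVneq i (sel r)) => [->|_]; by rewrite ?H ?mulr1 ?mul1r ?mulr0 ?mul0r.
Qed.

Lemma diag_selE (dd : 'I_n -> CC) (d4 : 'I_4 -> CC) : (forall r, dd (sel r) = d4 r) ->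
  Esel *m diag_mx (\row_i dd i) = diag_mx (\row_r d4 r) *m Esel.
Proof.
move=> H; apply/matrixP => r i; rewrite mul_diag_mx mul_mx_diag !mxE.
case: (eqVneq i (sel r)) => [->|_]; by rewrite ?H ?mulr1 ?mul1r ?mulr0 ?mul0r.
Qed.

Variable U : 'M[CC]_4.

Definition Msel : 'M[CC]_n := 1%:M + Esel^T *m (U - 1%:M) *m Esel.

Lemma M_conj (dd : 'I_n -> CC) (d4 : 'I_4 -> CC) : (forall r, dd (sel r) = d4 r) ->
  Msel *m diag_mx (\row_i dd i) *m adjm Msel =
  diag_mx (\row_i dd i) +
  Esel^T *m (U *m diag_mx (\row_r d4 r) *m adjm U - diag_mx (\row_r d4 r)) *m Esel.
Proof.
move=> H.
have HF := diag_selF H; have HE := diag_selE H.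
set D := diag_mx _ in HF HE *; set D4 := diag_mx _ in HF HE *.
set F := Esel^T in HF *; set E := Esel in HE *.
have EF : E *m F = 1%:M by apply: EselF.
rewrite /Msel adjmD adjm1 !adjmM adjmB adjm1 adjm_E adjm_Et -/F -/E.
set W := U - 1%:M; set W' := adjm U - 1%:M.
have -> : U *m D4 *m adjm U - D4 = D4 *m W' + W *m D4 + W *m D4 *m W'.
  rewrite /W /W' mulmxBr mulmx1 mulmxBl mul1mx mulmxBl mulmxBr mulmx1.
  by rewrite mulmxBr mulmx1 zid.
clearbody W W'.
rewrite [in RHS]mulmxDr [in RHS]mulmxDr [in RHS]mulmxDl [in RHS]mulmxDl.
rewrite [in LHS]mulmxDl mul1mx [in LHS]mulmxDr mulmx1 [in LHS]mulmxDl.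
rewrite -!mulmxA !(mulmxA D F) HF -?mulmxA HE -?mulmxA !(mulmxA E F) EF !mul1mx -?mulmxA.
by rewrite -!addrA; congr (_ + _); rewrite !addrA; congr (_ + _); rewrite addrC.
Qed.

Lemma M_unitary : U *m adjm U = 1%:M -> Msel *m adjm Msel = 1%:M.
Proof.
move=> UU.
have := @M_conj (fun _ => 1) (fun _ => 1) (fun _ => erefl).
have D1 : forall k, diag_mx (\row_(i < k) (1 : CC)) = 1%:M.
  by move=> k; apply/matrixP => i j; rewrite !mxE.
rewrite !D1 !mulmx1 UU subrr mulmx0 mul0mx addr0 => ->. done.
Qed.

End Sel.


Definition Pm {n} (ns : seq nat) (t : nat) : 'M[CC]_n :=
  diag_mx (\row_(i < n) ((blk ns i == t) : nat)%:R).

Definition tinv {n} ns (X : 'M[CC]_n) :=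
  \tr ((Pm ns 0 *m X *m Pm ns 1) *m (Pm ns 1 *m X *m Pm ns 2) *m (Pm ns 2 *m X *m Pm ns 0)).

Lemma Pm_comm n ns t (A : 'M[CC]_n) :
  (forall i j : 'I_n, blk ns i != blk ns j -> A i j = 0) -> Pm ns t *m A = A *m Pm ns t.
Proof.
move=> H; apply/matrixP => i j; rewrite mul_diag_mx mul_mx_diag !mxE.
case: (eqVneq (blk ns i) (blk ns j)) => [->|ne]; first by rewrite mulrC.
by rewrite H // mulr0 mul0r.
Qed.

Lemma map_Pm n ns t : map_mx Num.conj (Pm (n:=n) ns t) = Pm ns t.
Proof. by rewrite /Pm map_diag; congr diag_mx; apply/matrixP => i j; rewrite !mxE rmorph_nat. Qed.

Lemma inv_conj n ns (l R : 'M[CC]_n) : block_unitary ns l ->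
  tinv ns (l *m R *m adjm l) = tinv ns R.
Proof.
case=> lU lB.
have lCl := unitaryC lU.
have lU' : l *m adjm l = 1%:M := lU.
have Pl : forall t, Pm ns t *m l = l *m Pm ns t by move=> t; apply: Pm_comm.
have lP : forall t, adjm l *m Pm ns t = Pm ns t *m adjm l.
  move=> t; rewrite -[LHS]mulmx1 -[X in _ *m _ *m X]lU' mulmxA -(mulmxA _ _ l) Pl.
  by rewrite (mulmxA (adjm l) l) lCl mul1mx.
have cP : forall a b (A : 'M_n), Pm ns a *m (l *m A *m adjm l) *m Pm ns b
          = l *m (Pm ns a *m A *m Pm ns b) *m adjm l.
  by move=> a b A; rewrite !mulmxA Pl -!mulmxA lP.
rewrite /tinv !cP.
have tel : forall A B : 'M_n, l *m A *m adjm l *m (l *m B *m adjm l) = l *m (A *m B) *m adjm l.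
  by move=> A B; rewrite !mulmxA -(mulmxA _ (adjm l)) lCl mulmx1.
by rewrite !tel mxtrace_mulC (mulmxA (adjm l) l) lCl mul1mx.
Qed.

Lemma inv_real n ns (R : 'M[CC]_n) : map_mx Num.conj R = R -> Num.conj (tinv ns R) = tinv ns R.
Proof. by move=> HR; rewrite /tinv -trace_map_mx !map_mxM !map_Pm HR. Qed.

Lemma decomp_real n ns p q (l o h : 'M[CC]_n) :
  block_unitary ns l -> orthogonal_mx o -> block_unitary [:: p; q] h ->
  Num.conj (tinv ns (l *m o *m h *m Pm [:: p; q] 0 *m adjm (l *m o *m h)))
  = tinv ns (l *m o *m h *m Pm [:: p; q] 0 *m adjm (l *m o *m h)).
Proof.
move=> Hl [oU oR] [hU hB].
set D := Pm [:: p; q] 0.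
have hD : h *m D = D *m h by rewrite /D (Pm_comm _ hB).
have hh : h *m adjm h = 1%:M := hU.
have -> : l *m o *m h *m D *m adjm (l *m o *m h) = l *m (o *m D *m adjm o) *m adjm l.
  rewrite !adjmM -!mulmxA (mulmxA h D) hD -!mulmxA (mulmxA h) hh mul1mx.
  by rewrite !mulmxA.
rewrite inv_conj //; apply: inv_real.
have mo : map_mx Num.conj o = o by apply/matrixP => i j; rewrite mxE conj_Creal.
by rewrite !map_mxM mo /D map_Pm /adjm mo -map_trmx mo.
Qed.


Definition Delta (t : 'I_4) : 'M[CC]_4 := diag_mx (\row_(r < 4) ((r == t) : nat)%:R).

Lemma delta_lemma (A : 'M[CC]_4) a b : Delta a *m A *m Delta b = A a b *: delta_mx a b.
Proof.
apply/matrixP => i j; rewrite mul_mx_diag mul_diag_mx !mxE.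
case: (eqVneq i a) => [->|_]; case: (eqVneq j b) => [->|_] /=;
  by rewrite ?mulr1 ?mul1r ?mulr0 ?mul0r.
Qed.

Lemma tr_delta (a : 'I_4) : \tr (delta_mx a a : 'M[CC]_4) = 1.
Proof.
rewrite /mxtrace (bigD1 a) //= big1 => [|i /negbTE Hi]; last by rewrite mxE Hi.
by rewrite mxE !eqxx addr0.
Qed.

Section Eval.
Variables (n : nat) (ns : seq nat) (sel : 'I_4 -> 'I_n).
Hypothesis sel_inj : injective sel.
Hypothesis blk_sel : forall r : 'I_4, blk ns (sel r) = r.
Variable dd : 'I_n -> CC.
Variable Y : 'M[CC]_4.

Lemma PXP (a b : 'I_4) : a != b ->
  Pm ns a *m (diag_mx (\row_i dd i) + (Esel sel)^T *m Y *m Esel sel) *m Pm ns b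
  = (Esel sel)^T *m (Delta a *m Y *m Delta b) *m Esel sel.
Proof.
move=> ab.
have HF : Pm ns a *m (Esel sel)^T = (Esel sel)^T *m Delta a.
  by apply: diag_selF => r; rewrite ?mxE blk_sel.
have HE : Esel sel *m Pm ns b = Delta b *m Esel sel.
  by apply: diag_selE => r; rewrite ?mxE blk_sel.
rewrite mulmxDr mulmxDl.
have -> : Pm ns a *m diag_mx (\row_i dd i) *m Pm ns b = 0.
  apply/matrixP => i j; rewrite mul_mx_diag mul_diag_mx !mxE.
  case: (eqVneq i j) => [->|]; last by rewrite mulr0n mulr0 mul0r.
  case: (eqVneq (blk ns j) a) => [ea|]; last by rewrite mul0r mul0r.
  have : blk ns j != b by rewrite ea.
  by move/negbTE => ->; rewrite mulr0.
by rewrite add0r !mulmxA HF -!mulmxA HE.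
Qed.

Lemma inv_eval : tinv ns (diag_mx (\row_i dd i) + (Esel sel)^T *m Y *m Esel sel)
  = Y i0 i1 * Y i1 i2 * Y i2 i0.
Proof.
have EF := EselF sel_inj.
rewrite /tinv (@PXP i0 i1 isT) (@PXP i1 i2 isT) (@PXP i2 i0 isT).
rewrite -!mulmxA !(mulmxA (Esel sel) (Esel sel)^T) EF !mul1mx.
rewrite mxtrace_mulC -!mulmxA EF mulmx1.
rewrite (_ : Delta i0 *m _ = (Delta i0 *m Y *m Delta i1) *m (Delta i1 *m Y *m Delta i2) *m (Delta i2 *m Y *m Delta i0)); last by rewrite !mulmxA.
rewrite !delta_lemma.
rewrite -!scalemxAl -!scalemxAr !mul_delta_mx !scalerA mxtraceZ.
rewrite -?scalemxAl ?mul_delta_mx ?mxtraceZ tr_delta; ring.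
Qed.
End Eval.


Section NatPart.
Local Open Scope nat_scope.
Lemma blk_st ns r : all (fun m => 0 < m) ns -> r < size ns ->
  blk ns (sumn (take r ns)) = r.
Proof.
elim: ns r => [|m ns IH] [|r] //= /andP [m0 pos] rlt; first by rewrite m0.
have -> : (m + sumn (take r ns) < m) = false by lia.
by rewrite addKn IH.
Qed.

Lemma st_lt ns r : all (fun m => 0 < m) ns -> r < size ns ->
  sumn (take r ns) < sumn (take r.+1 ns) /\ sumn (take r.+1 ns) <= sumn ns.
Proof.
elim: ns r => [|m ns IH] [|r] //= /andP [m0 pos] rlt.
  rewrite take0 /=; split; first lia.
  suff : sumn (take 0 ns) <= sumn ns by rewrite take0 /=; lia.
  by rewrite take0.
have [H1 H2] := IH r pos rlt; split; lia.
Qed.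

Lemma exists_perm n p (a b c d : 'I_n) :
  val a = 0 -> a < b -> b < c -> c < d -> 3 <= p -> p + 3 <= n ->
  exists s : {perm 'I_n}, [/\ s a < p, s b < p, p <= s c & p <= s d].
Proof.
move=> a0 ab bc cd p3 pn.
have a0n : nat_of_ord a = 0 := a0.
have n1 : n.-1 < n by lia.
have n2 : n.-2 < n by lia.
have o1 : 1 < n by lia.
pose e1 : 'I_n := Ordinal n1.
pose e2 : 'I_n := Ordinal n2.
pose u1 : 'I_n := Ordinal o1.
have ne : forall x y : 'I_n, val x != val y -> x != y by move=> x y; apply: contra => /eqP ->.
case: (ltnP b p) => bp.
  case: (ltnP c p) => cp.
    case: (ltnP d p) => dp.
      exists (tperm c e1 * tperm d e2)%g; rewrite !permM.
      have Hc : tperm c e1 a = a /\ tperm c e1 b = b /\ tperm c e1 d = d.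
        by split; [|split]; apply: tpermD; apply: ne => /=; lia.
      case: Hc => [-> [-> ->]]; rewrite tpermL.
      have Hd : tperm d e2 a = a /\ tperm d e2 b = b /\ tperm d e2 e1 = e1.
        by split; [|split]; apply: tpermD; apply: ne => /=; lia.
      case: Hd => [-> [-> ->]]; rewrite tpermL.
      split => /=; lia.
    pose e : 'I_n := if val d == n.-1 then e2 else e1.
    have ep : p <= e /\ val e != val d.
      rewrite /e; case: eqP => /= H; lia.
    case: ep => ep ed.
    exists (tperm c e).
    have Hc : tperm c e a = a /\ tperm c e b = b /\ tperm c e d = d.
      split; [|split]; apply: tpermD; apply: ne => //=; lia.
    case: Hc => [-> [-> ->]]; rewrite tpermL; split => //; lia.
  by exists 1%g; rewrite !perm1; split => //; lia.
exists (tperm b u1).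
have Hc : tperm b u1 a = a /\ tperm b u1 c = c /\ tperm b u1 d = d.
  split; [|split]; apply: tpermD; apply: ne => /=; lia.
case: Hc => [-> [-> ->]]; rewrite tpermL; split => //=; lia.
Qed.


End NatPart.

Lemma unitary_mul n (A B : 'M[CC]_n) : unitary_mx A -> unitary_mx B -> unitary_mx (A *m B).
Proof.
rewrite /unitary_mx !adjmx_adjm => HA HB.
by rewrite adjmM mulmxA -(mulmxA A) HB mulmx1 HA.
Qed.

Lemma perm_diag n (s : {perm 'I_n}) (f : 'I_n -> CC) :
  perm_mx s *m diag_mx (\row_i f i) *m (perm_mx s)^T = diag_mx (\row_i f (s i)).
Proof.
rewrite tr_perm_mx -row_permE -col_permE; apply/matrixP => i j; rewrite !mxE.
by rewrite (inj_eq perm_inj).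
Qed.

Lemma adjm_perm n (s : {perm 'I_n}) : adjm (perm_mx s : 'M[CC]_n) = (perm_mx s)^T.
Proof. by rewrite /adjm map_perm_mx. Qed.

Lemma perm_unitary n (s : {perm 'I_n}) : perm_mx s *m (perm_mx s : 'M[CC]_n)^T = 1%:M.
Proof. by rewrite tr_perm_mx -perm_mxM mulgV perm_mx1. Qed.

Lemma blk2 p q x : (blk [:: p; q] x == 0) = (x < p)%N.
Proof. by rewrite /=; case: ifP. Qed.

Unset Implicit Arguments. Set Strict Implicit.

Theorem proposition6p7 (n p q : nat) (ns : seq nat) :
  all (fun m => 0 < m)%N ns -> sumn ns = n ->
  (0 < p)%N -> (0 < q)%N -> (p + q)%N = n ->
  (3 <= minn p q)%N -> (4 <= size ns)%N ->
  (* L G' H is contained in G ... *)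
  (forall l o h : 'M[CC]_n,
      block_unitary ns l -> orthogonal_mx o -> block_unitary [:: p; q] h ->
      unitary_mx (l *m o *m h)) /\
  (* ... and properly: some g in G is not of the form l o h *)
  (exists g : 'M[CC]_n, unitary_mx g /\
     ~ (exists l o h : 'M[CC]_n,
          [/\ block_unitary ns l, orthogonal_mx o, block_unitary [:: p; q] h
            & g = l *m o *m h])).
Proof.
move=> pos sumE p0 q0 pqn mpq sz.
split.
  move=> l o h [lU _] [oU _] [hU _].
  by apply: unitary_mul => //; apply: unitary_mul.
have Hlt : forall r : 'I_4, (sumn (take r ns) < n)%N.
  move=> r; have rs : (r < size ns)%N by apply: leq_trans sz; exact: ltn_ord.
  have [H1 H2] := st_lt pos rs; lia.
pose sel (r : 'I_4) : 'I_n := Ordinal (Hlt r).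
have blk_sel : forall r : 'I_4, blk ns (sel r) = r.
  move=> r; apply: blk_st => //; apply: leq_trans sz; exact: ltn_ord.
have sel_inj : injective sel.
  by move=> r r' E; apply: ord_inj; rewrite -(blk_sel r) E blk_sel.
have stlt : forall r, (r < 3)%N -> (sumn (take r ns) < sumn (take r.+1 ns))%N.
  move=> r r3; have rs : (r < size ns)%N by lia.
  by case: (st_lt pos rs).
pose i3 : 'I_4 := @Ordinal 4 3 isT.
have [s [sa sb sc sd]] : exists s : {perm 'I_n},
    [/\ (s (sel i0) < p)%N, (s (sel i1) < p)%N, (p <= s (sel i2))%N & (p <= s (sel i3))%N].
  apply: exists_perm => /=; first by rewrite take0.
  - by apply: stlt.
  - by apply: stlt.
  - by apply: stlt.
  - lia.
  - lia.
pose dd (i : 'I_n) : CC := ((blk [:: p; q] (s i) == 0) : nat)%:R.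
pose d4 (r : 'I_4) : CC := ((r < 2)%N : nat)%:R.
have Hs : forall r, dd (sel r) = d4 r.
  have E4 : forall r : 'I_4, [\/ r = i0, r = i1, r = i2 | r = i3].
    by case => [[|[|[|[|r]]]] Hr] //; [apply: Or41|apply: Or42|apply: Or43|apply: Or44]; apply: ord_inj.
  move=> r; rewrite /dd /d4 blk2.
  case: (E4 r) => ->.
  - by rewrite sa.
  - by rewrite sb.
  - by rewrite ltnNge sc.
  - by rewrite ltnNge sd.
have UU : U *m adjm U = 1%:M := U_unit.
pose M := Msel sel U.
exists (M *m perm_mx s); split.
  rewrite /unitary_mx adjmx_adjm adjmM adjm_perm mulmxA -(mulmxA M) perm_unitary mulmx1.
  have := M_unitary sel_inj UU. done.
case=> l [o [h [Hl Ho Hh Eg]]].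
have := decomp_real Hl Ho Hh; rewrite -Eg.
have -> : M *m perm_mx s *m Pm [:: p; q] 0 *m adjm (M *m perm_mx s) = M *m diag_mx (\row_i dd i) *m adjm M.
  rewrite adjmM adjm_perm !mulmxA -(mulmxA M (perm_mx s)) -(mulmxA M) /Pm perm_diag.
  done.
rewrite (M_conj sel_inj U Hs) (inv_eval sel_inj blk_sel).
have YQ : forall i j : 'I_4, i != j ->
    (U *m diag_mx (\row_r d4 r) *m adjm U - diag_mx (\row_r d4 r)) i j = Q i j.
  move=> i j ij; rewrite [LHS]mxE [X in _ + X]mxE [X in _ - X]mxE (negbTE ij) mulr0n subr0.
  by [].
rewrite !YQ // => H.
by move/negP: trip_nonreal; apply; rewrite H.
Qed.
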